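(* Fix integers $N\ge 2$ and $K\ge 1$. For every $r\in\mathbb{N}^+$, $M^{\text{RESCAL}}_{2r+1}$ subsumes $M^{\text{ComplEx}}_r$, i.e. $\pi(\mathcal{M}^{\text{ComplEx}}_r)\subseteq\pi(\mathcal{M}^{\text{RESCAL}}_{2r+1})$.
   Context: There are $N$ entities and $K$ relations. A score-based model assigns a score $s_k(i,j)\in\mathbb{R}$ to each triple, $i,j\in\{1,\dots,N\}$, $k\in\{1,\dots,K\}$; its scoring tensor $\mathcal{S}\in\mathbb{R}^{N\times N\times K}$ has frontal slices $\mathbf{S}_k$ with $[\mathbf{S}_k]_{ij}=s_k(i,j)$. For a real $N\times N$ matrix $\mathbf{S}$, $\pi(\mathbf{S})$ is the matrix of dense ranks: $\pi_{ij}(\mathbf{S})=1+$ (number of distinct values among entries of $\mathbf{S}$ strictly larger than $s_{ij}$). For tensors, $\pi$ acts slicewise; for a set $X$, $\pi(X)=\{\pi(x):x\in X\}$. RESCAL of size $r$: parameters $\mathbf{A}\in\mathbb{R}^{N\times r}$ (rows $\mathbf{a}_i$), $\mathbf{R}_1,\dots,\mathbf{R}_K\in\mathbb{R}^{r\times r}$, score $\mathbf{a}_i^T\mathbf{R}_k\mathbf{a}_j$. ComplEx of size $r$: parameters $\mathbf{A}\in\mathbb{C}^{N\times r}$ (rows $\mathbf{a}_i$), $\mathbf{R}\in\mathbb{C}^{K\times r}$ (rows $\mathbf{r}_k$), score $s_k(i,j)=\mathrm{Re}(\mathbf{a}_i^T\mathrm{diag}(\mathbf{r}_k)\overline{\mathbf{a}_j})$,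 where $\overline{\cdot}$ is complex conjugation. $\mathcal{M}^t_r$ is the set of scoring tensors of all models of type $t$ and size $r$. A class subsumes another if its set of representable ranking tensors $\pi(\mathcal{M})$ contains that of the other. *)

(* Defs.v *)
From mathcomp Require Import all_boot all_order all_algebra.
Set Warnings "-notation-overridden,-ambiguous-paths".

From mathcomp Require Import reals complex.
Set Implicit Arguments. Unset Strict Implicit. Unset Printing Implicit Defensive.
Import Order.TTheory GRing.Theory Num.Theory.
Local Open Scope ring_scope.

(* A scoring tensor: s i j k = s_k(i,j), entities 'I_N, relations 'I_K. *)
Definition tensor (R : Type) (N K : nat) := 'I_N -> 'I_N -> 'I_K -> R.

Definition dense_rank (R : realType) (N : nat) (S : 'I_N -> 'I_N -> R)
  (i j : 'I_N) : nat :=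
  (size (undup [seq S p.1 p.2 | p <- enum {: 'I_N * 'I_N}
                               & S i j < S p.1 p.2])).+1.

Definition pi_tensor (R : realType) (N K : nat) (S : tensor R N K) :
  tensor nat N K :=
  fun i j k => dense_rank (fun a b => S a b k) i j.

Definition rescal_score (R : realType) (N K r : nat) (A : 'M[R]_(N, r))
  (Rk : 'I_K -> 'M[R]_r) : tensor R N K :=
  fun i j k => (row i A *m Rk k *m (row j A)^T) 0 0.

Definition complex_score (R : realType) (N K r : nat) (A : 'M[R[i]]_(N, r))
  (Rm : 'M[R[i]]_(K, r)) : tensor R N K :=
  fun i j k => complex.Re (\sum_(l < r) A i l * Rm k l * conjc (A j l)).

Definition in_rescal (R : realType) (N K r : nat) (S : tensor R N K) : Prop :=
  exists (A : 'M[R]_(N, r)) (Rk : 'I_K -> 'M[R]_r), S = rescal_score A Rk.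

Definition in_complex (R : realType) (N K r : nat) (S : tensor R N K) : Prop :=
  exists (A : 'M[R[i]]_(N, r)) (Rm : 'M[R[i]]_(K, r)), S = complex_score A Rm.

(* Main.v *)
Require Import Defs.
From mathcomp Require Import all_boot all_order all_algebra.
From mathcomp Require Import reals complex.
From Stdlib Require Import FunctionalExtensionality.
From mathcomp Require Import ring.
Import GRing.Theory.
Local Open Scope ring_scope.

Lemma Re_sum (R : realType) (r : nat) (F : 'I_r -> R[i]) :
  complex.Re (\sum_(l < r) F l) = \sum_(l < r) complex.Re (F l).
Proof.
apply: (big_morph (@complex.Re R)) => // [[a b] [c d]] //.
Qed.

Lemma diag_form (R : realType) (r : nat) (u d v : 'rV[R]_r) :
  (u *m diag_mx d *m v^T) 0 0 = \sum_(l < r) u 0 l * d 0 l * v 0 l.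
Proof.
rewrite mul_mx_diag !mxE; apply: eq_bigr => l _; rewrite !mxE.
done.
Qed.

Lemma addE (R : realType) (P Q : 'M[R]_(1,1)) : (P + Q) 0 0 = P 0 0 + Q 0 0.
Proof. by rewrite mxE. Qed.

Lemma key (R : realType) (N K r m : nat) (e : (r + r + 1)%N = m)
  (A : 'M[R[i]]_(N, r)) (Rm : 'M[R[i]]_(K, r)) :
  in_rescal m (complex_score A Rm).
Proof.
subst m.
pose X := map_mx (@complex.Re R) A. pose Y := map_mx (@complex.Im R) A.
pose u k := row k (map_mx (@complex.Re R) Rm).
pose v k := row k (map_mx (@complex.Im R) Rm).
exists (row_mx (row_mx X Y) (0 : 'M[R]_(N, 1))).
exists (fun k => block_mx (block_mx (diag_mx (u k)) (diag_mx (v k))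
                                     (diag_mx (- v k)) (diag_mx (u k))) 0 0 0).
apply: functional_extensionality => i; apply: functional_extensionality => j;
apply: functional_extensionality => k.
rewrite /rescal_score /complex_score !row_row_mx !row0 mul_row_block ?mulmx0 ?mul0mx ?addr0.
rewrite mul_row_block !tr_row_mx mul_row_col mul_row_col ?mulmx0 ?mul0mx ?addr0 ?tr0 ?mulmx0 ?addr0.
rewrite !mulmxDl !addE !diag_form -!big_split Re_sum; apply: eq_bigr => l _.
rewrite /X /Y /u /v !mxE.
case: (A i l) (A j l) (Rm k l) => [a b] [c d] [x y] /=.
ring.
Qed.

Theorem corollary1 (R : realType) (N K : nat) (hN : (2 <= N)%N) (hK : (1 <= K)%N)
  (r : nat) (hr : (0 < r)%N) (S : tensor R N K) :
  in_complex r S ->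
  exists S' : tensor R N K, in_rescal (2 * r + 1) S' /\ pi_tensor S' = pi_tensor S.
Proof.
move=> [A [Rm ->]]; exists (complex_score A Rm); split => //.
apply: key; by rewrite mul2n addnn.
Qed.
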